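(* Let $\mathbf{x}=(\ldots,x_{-1},x_0,x_1,\ldots)$ be commuting indeterminates indexed by $\mathbb{Z}$. Let $T=(t_{ij})$ be an $\mathbb{N}$-tableau of shape $\lambda$ and let $\widehat{T}$ be its image under the toggle map defined in the context. Then \[|\widehat{T}|_{\mathbf{x}}=\sum_{(i,j)\in\lambda}t_{ij}\,h_{\lambda}(i,j;\mathbf{x}).\]
   Context: Partitions are drawn in English notation with matrix coordinates: the box in row $i$ and column $j$ is $(i,j)$. An $\mathbb{N}$-tableau of shape $\lambda$ is an assignment of a nonnegative integer to each box of $\lambda$. The hook $H_\lambda(i,j)$ is the set of boxes $(i,j')\in\lambda$ with $j'\ge j$ together with the boxes $(i',j)\in\lambda$ with $i'\ge i$. The $\mathbf{x}$-hook-length is $h_\lambda(i,j;\mathbf{x})=\sum_{(i',j')\in H_\lambda(i,j)}x_{j'-i'}$, and the $\mathbf{x}$-weight of an $\mathbb{N}$-tableau $S=(s_{ij})$ of shape $\lambda$ is $|S|_{\mathbf{x}}=\sum_{(i,j)\in\lambda}s_{ij}x_{j-i}$. A corner box is a box $(i,j)$ such that neither $(i+1,j)$ nor $(i,j+1)$ is a box. The toggle map $T\mapsto\widehat{T}$ is defined recursively: $\widehat{\emptyset}=\emptyset$; if $T'$ is obtained from $T$ by adding a corner box $(i,j)$ (of $\mathrm{sh}(T')$) with entry $x$, then $\widehat{T'}$ is obtained from $\widehat{T}$ as follows. For $k\ge1$ let $\beta_k,\gamma_k,\alpha_k$ be the entries of $\widehat{T}$ at $(i-k,j-k)$, $(i-k+1,j-k)$,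 $(i-k,j-k+1)$ respectively (taken to be $0$ if the box is not in $\mathrm{sh}(T)$). Then $\widehat{T'}$ agrees with $\widehat{T}$ except that for $1\le k<\min(i,j)$ the entry at $(i-k,j-k)$ becomes $\max(\alpha_{k+1},\gamma_{k+1})+\min(\alpha_k,\gamma_k)-\beta_k$, and the entry at $(i,j)$ is $\max(\alpha_1,\gamma_1)+x$. This is independent of the order in which boxes are added. *)

(* Defs.v *)
(* Coordinates are 1-indexed: box (i,j), i = row, j = column. *)
From mathcomp Require Import all_boot all_order all_algebra.
Set Implicit Arguments. Unset Strict Implicit. Unset Printing Implicit Defensive.
Import GRing.Theory.
Local Open Scope ring_scope.

Definition is_partition (la : seq nat) : bool :=
  sorted geq la && all (fun n => (0 < n)%N) la.

Definition boxes (la : seq nat) : seq (nat * nat) :=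
  flatten [seq [seq (i, j) | j <- iota 1 (nth 0%N la i.-1)] | i <- iota 1 (size la)].

Definition in_hook (i j : nat) (b : nat * nat) : bool :=
  ((b.1 == i) && (j <= b.2)%N) || ((b.2 == j) && (i <= b.1)%N).

Definition xc (R : zmodType) (x : int -> R) (b : nat * nat) : R :=
  x ((b.2)%:Z - (b.1)%:Z).

Definition hooklen (R : zmodType) (x : int -> R) (la : seq nat) (i j : nat) : R :=
  \sum_(b <- boxes la | in_hook i j b) xc x b.

Definition weight (R : zmodType) (x : int -> R) (la : seq nat)
  (S : nat -> nat -> nat) : R :=
  \sum_(b <- boxes la) xc x b *+ S b.1 b.2.

Definition young_seq (p : seq (nat * nat)) : bool :=
  all (fun b => [&& (0 < b.1)%N, (0 < b.2)%N,
                   (b.1 == 1%N) || ((b.1.-1, b.2) \in p) &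
                   (b.2 == 1%N) || ((b.1, b.2.-1) \in p)]) p.

(* s is an order of adding the boxes of la one at a time such that every
   intermediate shape is a Young diagram (so each added box is a corner box
   of the new shape). *)
Definition building_seq (la : seq nat) (s : seq (nat * nat)) : Prop :=
  uniq s /\ perm_eq s (boxes la) /\ forall n, young_seq (take n s).

(* One step of the toggle map: p = boxes of sh(T), f = entries of \hat T,
   (i,j) = added corner box with entry e. Entries outside p read as 0. *)
Definition toggle_step (p : seq (nat * nat)) (f : nat -> nat -> nat)
  (b : nat * nat) (e : nat) : nat -> nat -> nat :=
  let i := b.1 in let j := b.2 in
  let get a c := if (a, c) \in p then f a c else 0%N in
  fun a c =>
    if (a == i) && (c == j) then (maxn (get i.-1 j) (get i j.-1) + e)%N
    else if [&& (0 < a)%N, (0 < c)%N, (a < i)%N & (i - a == j - c)%N] then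
      (* k = i - a, beta_k = get a c, alpha_k = get a c.+1, gamma_k = get a.+1 c,
         alpha_{k+1} = get a.-1 c, gamma_{k+1} = get a c.-1 *)
      (maxn (get a.-1 c) (get a c.-1) + minn (get a c.+1) (get a.+1 c) - get a c)%N
    else f a c.

Fixpoint toggle_rec (p : seq (nat * nat)) (f : nat -> nat -> nat)
  (s : seq (nat * nat)) (T : nat -> nat -> nat) : nat -> nat -> nat :=
  match s with
  | [::] => f
  | b :: s' => toggle_rec (rcons p b) (toggle_step p f b (T b.1 b.2)) s' T
  end.

Definition toggle (s : seq (nat * nat)) (T : nat -> nat -> nat) : nat -> nat -> nat :=
  toggle_rec [::] (fun _ _ => 0%N) s T.

(* Main.v *)
Require Import Defs.
From mathcomp Require Import all_boot all_order all_algebra zify.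
Set Implicit Arguments. Unset Strict Implicit. Unset Printing Implicit Defensive.
Import GRing.Theory.

Definition getp (p : seq (nat*nat)) (f : nat -> nat -> nat) a c : nat :=
  if (a, c) \in p then f a c else 0%N.

Definition Dg (g : nat -> nat -> nat) a c : nat := \sum_(0 <= k < a) g (a - k)%N (c - k)%N.

Definition Rs (T : nat -> nat -> nat) (p : seq (nat*nat)) a c : nat :=
  \sum_(b <- p) (if (b.1 <= a) && (b.2 <= c) then T b.1 b.2 else 0)%N.

Lemma youngP q b : young_seq q -> b \in q ->
  [/\ (0 < b.1)%N, (0 < b.2)%N, (b.1 == 1%N) || ((b.1.-1, b.2) \in q)
    & (b.2 == 1%N) || ((b.1, b.2.-1) \in q)].
Proof. by move=> /allP H /H /and4P. Qed.

Lemma young_pos q a c : young_seq q -> (a, c) \in q -> (0 < a)%N /\ (0 < c)%N.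
Proof. by move=> Y /(youngP Y) [] . Qed.

Lemma young_up q a c d : young_seq q -> (a, c) \in q -> (d < a)%N -> (a - d, c) \in q.
Proof.
move=> Y H; elim: d => [|d IH] Hd; first by rewrite subn0.
have /(youngP Y) [/= h1 h2 h3 h4] := IH (ltnW Hd).
move: h3; have -> : (a - d == 1)%N = false by apply/eqP; lia.
by rewrite /= subnS.
Qed.

Lemma young_left q a c d : young_seq q -> (a, c) \in q -> (d < c)%N -> (a, c - d) \in q.
Proof.
move=> Y H; elim: d => [|d IH] Hd; first by rewrite subn0.
have /(youngP Y) [/= h1 h2 h3 h4] := IH (ltnW Hd).
move: h4; have -> : (c - d == 1)%N = false by apply/eqP; lia.
by rewrite /= subnS.
Qed.

Lemma young_closed q a c a' c' : young_seq q -> (a, c) \in q ->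
  (0 < a')%N -> (a' <= a)%N -> (0 < c')%N -> (c' <= c)%N -> (a', c') \in q.
Proof.
move=> Y H h1 h2 h3 h4.
have h : (a - a' < a)%N by lia.
have := young_up Y H h; rewrite subKn // => H1.
have h' : (c - c' < c)%N by lia.
by have := young_left Y H1 h'; rewrite subKn.
Qed.

Lemma sum_bool (I : Type) (r : seq I) (P : pred I) :
  (\sum_(k <- r) (P k : nat))%N = count P r.
Proof. elim: r => [|a r IH]; by rewrite ?big_nil ?big_cons ?IH. Qed.

Lemma sum_widen (F : nat -> nat) a n : (a <= n)%N -> (forall k, (a <= k)%N -> F k = 0%N) ->
  (\sum_(0 <= k < n) F k = \sum_(0 <= k < a) F k)%N.
Proof.
move=> Han HF; rewrite (@big_cat_nat _ _ _ a 0 n _ _ (leq0n a) Han) /=.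
rewrite [X in (_ + X)%N](_ : _ = 0%N) ?addn0 //.
by rewrite big_nat_cond big1 // => k /andP[/andP[hk _] _]; exact: HF.
Qed.

Definition WL (R : zmodType) (x : int -> R) (q : seq (nat*nat)) (h : nat -> nat -> nat) : R :=
  (\sum_(b <- q) xc x b *+ h b.1 b.2)%R.
Definition hk (R : zmodType) (x : int -> R) (q : seq (nat*nat)) (b : nat*nat) : R :=
  (\sum_(b' <- q | in_hook b.1 b.2 b') xc x b')%R.
Definition RHSs (R : zmodType) (x : int -> R) (T : nat -> nat -> nat) (q : seq (nat*nat)) : R :=
  (\sum_(b <- q) hk x q b *+ T b.1 b.2)%R.

Lemma reindex (q : seq (nat*nat)) (h : nat -> nat -> nat) (cnd : nat*nat -> bool)
  (P : nat -> nat*nat) n :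
  uniq q -> (forall b, b \in q -> (\sum_(0 <= k < n) ((b == P k) : nat))%N = cnd b) ->
  (forall k, h (P k).1 (P k).2 != 0%N -> P k \in q) ->
  (\sum_(b <- q) (cnd b * h b.1 b.2) = \sum_(0 <= k < n) h (P k).1 (P k).2)%N.
Proof.
move=> Uq Hc Hh.
transitivity (\sum_(b <- q) \sum_(0 <= k < n) ((b == P k) * h b.1 b.2))%N.
  by apply: eq_big_seq => b hb; rewrite -big_distrl /= Hc.
rewrite exchange_big; apply: eq_bigr => k _.
transitivity (\sum_(b <- q) ((b == P k) * h (P k).1 (P k).2))%N.
  by apply: eq_bigr => b _; case: eqP => [->|]; rewrite ?mul0n.
rewrite -big_distrl /= sum_bool (@eq_count _ _ (pred1 (P k))) // count_uniq_mem //.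
case E: (h (P k).1 (P k).2 == 0%N); first by rewrite (eqP E) muln0.
by rewrite Hh ?E ?mul1n.
Qed.

Definition Inv (R : zmodType) (x : int -> R) (T : nat -> nat -> nat) p f : Prop :=
  [/\ (forall a c, (a,c) \in p -> (getp p f a.-1 c <= f a c)%N /\ (getp p f a c.-1 <= f a c)%N),
      (forall a c, (a,c) \in p -> (a.+1,c.+1) \notin p -> Dg (getp p f) a c = Rs T p a c)
    & WL x p f = RHSs x T p].

Lemma getp0l q h c : young_seq q -> getp q h 0 c = 0%N.
Proof. by move=> Y; rewrite /getp; case: ifP => // /(young_pos Y) []. Qed.
Lemma getp0r q h a : young_seq q -> getp q h a 0 = 0%N.
Proof. by move=> Y; rewrite /getp; case: ifP => // /(young_pos Y) []. Qed.

Lemma getp_in q h a c : (a,c) \in q -> getp q h a c = h a c.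
Proof. by rewrite /getp => ->. Qed.

Section Step.
Variables (R : zmodType) (x : int -> R) (T : nat -> nat -> nat) (p : seq (nat*nat))
  (f : nat -> nat -> nat) (i j : nat).
Hypotheses (Hu : uniq p) (Hy : young_seq p) (Hnin : (i,j) \notin p)
  (Hy' : young_seq (rcons p (i,j))).
Hypothesis Hrpp : forall a c, (a,c) \in p ->
  (getp p f a.-1 c <= f a c)%N /\ (getp p f a c.-1 <= f a c)%N.
Hypothesis HD : forall a c, (a,c) \in p -> (a.+1,c.+1) \notin p ->
  Dg (getp p f) a c = Rs T p a c.

Local Notation g := (getp p f).
Local Notation p' := (rcons p (i,j)).
Local Notation f' := (toggle_step p f (i,j) (T i j)).
Local Notation g' := (getp p' f').
Local Notation cond a c := [&& (0 < a)%N, (0 < c)%N, (a < i)%N & (i - a == j - c)%N].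

Lemma mem_p' a c : ((a,c) \in p') = ((a == i) && (c == j)) || ((a,c) \in p).
Proof. by rewrite mem_rcons in_cons xpair_eqE. Qed.

Lemma Hij : (0 < i)%N /\ (0 < j)%N.
Proof.
have hin : (i,j) \in p' by rewrite mem_p' !eqxx.
by have [] := youngP Hy' hin.
Qed.

Lemma up_in : (1 < i)%N -> (i.-1, j) \in p.
Proof.
move=> hi; have hin : (i,j) \in p' by rewrite mem_p' !eqxx.
have [_ _ h3 _] := youngP Hy' hin.
move: h3 => /=; rewrite mem_p'; have -> : (i == 1)%N = false by apply/eqP; lia.
have -> : (i.-1 == i) = false by apply/eqP; lia.
done.
Qed.

Lemma left_in : (1 < j)%N -> (i, j.-1) \in p.
Proof.
move=> hj; have hin : (i,j) \in p' by rewrite mem_p' !eqxx.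
have [_ _ _ h3] := youngP Hy' hin.
move: h3 => /=; rewrite mem_p'; have -> : (j == 1)%N = false by apply/eqP; lia.
have -> : (j.-1 == j) = false by apply/eqP; lia.
by rewrite andbF.
Qed.

Lemma rect a c : (0 < a)%N -> (a <= i)%N -> (0 < c)%N -> (c <= j)%N ->
  ~~ ((a == i) && (c == j)) -> (a,c) \in p.
Proof.
move=> h1 h2 h3 h4 h5; case: (ltnP a i) => h.
  have hi : (1 < i)%N by lia.
  apply: (young_closed Hy (up_in hi)); lia.
have hj : (1 < j)%N by lia.
apply: (young_closed Hy (left_in hj)); lia.
Qed.

Lemma outside a c : (a,c) \in p -> (i <= a)%N -> (j <= c)%N -> False.
Proof.
move=> H h1 h2; have [hi hj] := Hij.
by move: Hnin; rewrite (young_closed Hy H).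
Qed.

Lemma f'E a c : f' a c =
  if (a == i) && (c == j) then (maxn (g i.-1 j) (g i j.-1) + T i j)%N
  else if cond a c then
    (maxn (g a.-1 c) (g a c.-1) + minn (g a c.+1) (g a.+1 c) - g a c)%N
  else f a c.
Proof. by []. Qed.

Lemma g'_other a c : ~~ ((a == i) && (c == j)) -> ~~ cond a c -> g' a c = g a c.
Proof.
move=> h1 h2; rewrite /getp mem_p' (negbTE h1) /= f'E (negbTE h1) (negbTE h2).
by rewrite /getp.
Qed.

Lemma cond_in a c : cond a c -> (a,c) \in p.
Proof. move=> hc; apply: rect; lia. Qed.

Lemma g'_diag a c : cond a c -> g' a c =
    (maxn (g a.-1 c) (g a c.-1) + minn (g a c.+1) (g a.+1 c) - g a c)%N.
Proof.
move=> hc; have hin := cond_in hc.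
have hn : ((a == i) && (c == j)) = false by apply/negbTE; lia.
by rewrite getp_in ?mem_p' ?hin ?orbT // f'E hn hc.
Qed.

Lemma g'_ij : g' i j = (maxn (g i.-1 j) (g i j.-1) + T i j)%N.
Proof. by rewrite /getp mem_p' !eqxx /= f'E !eqxx. Qed.

Lemma diag_bounds a c : cond a c ->
  [/\ (g a.-1 c <= g a c)%N, (g a c.-1 <= g a c)%N, (g a c <= g a c.+1)%N
    & (g a c <= g a.+1 c)%N].
Proof.
move=> hc; have hin := cond_in hc.
have hr : (a, c.+1) \in p by apply: rect; lia.
have hd : (a.+1, c) \in p by apply: rect; lia.
have [r1 r2] := Hrpp hin; have [r3 _] := Hrpp hd; have [_ r4] := Hrpp hr.
move: r1 r2 r3 r4 => /=; rewrite !(getp_in _ hin) !(getp_in _ hr) !(getp_in _ hd).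
by split.
Qed.

Lemma diag_val a c : cond a c ->
  (maxn (g a.-1 c) (g a c.-1) <= g' a c <= minn (g a c.+1) (g a.+1 c))%N.
Proof. move=> hc; have [] := diag_bounds hc; rewrite g'_diag //; lia. Qed.



Lemma g'0l c : g' 0 c = 0%N. Proof. exact: getp0l. Qed.
Lemma g'0r a : g' a 0 = 0%N. Proof. exact: getp0r. Qed.
Lemma g0l c : g 0 c = 0%N. Proof. exact: getp0l. Qed.
Lemma g0r a : g a 0 = 0%N. Proof. exact: getp0r. Qed.

Lemma rpp' a c : (a,c) \in p' ->
  (g' a.-1 c <= f' a c)%N /\ (g' a c.-1 <= f' a c)%N.
Proof.
move=> H; rewrite -(getp_in f' H); have [hi hj] := Hij.
move: H; rewrite mem_p' => /orP[/andP[/eqP-> /eqP->]|H].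
  by rewrite g'_ij !g'_other; try lia; split; lia.
case: (boolP (cond a c)) => hc.
  have := diag_val hc; have [d1 d2 d3 d4] := diag_bounds hc.
  have [a0|apos] := posnP a; first by lia.
  rewrite [g' a.-1 c]g'_other ?[g' a c.-1]g'_other; try lia; split; lia.
have [a0 c0] := young_pos Hy H.
have hne : ~~ ((a == i) && (c == j)).
  by apply/negP => /andP[/eqP E1 /eqP E2]; move: Hnin; rewrite -E1 -E2 H.
rewrite [g' a c]g'_other //.
have [r1 r2] := Hrpp H; rewrite (getp_in _ H).
split.
- case: (boolP ((a.-1 == i) && (c == j))) => E.
    by exfalso; apply: (outside H); lia.
  case: (boolP (cond a.-1 c)) => hc'.
    have := diag_val hc'; have -> : a.-1.+1 = a by lia.
    rewrite (getp_in _ H); lia.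
  by rewrite g'_other.
- case: (boolP ((a == i) && (c.-1 == j))) => E.
    by exfalso; apply: (outside H); lia.
  case: (boolP (cond a c.-1)) => hc'.
    have := diag_val hc'; have -> : c.-1.+1 = c by lia.
    rewrite (getp_in _ H); lia.
  by rewrite g'_other.
Qed.



Local Notation al k := (g (i - k.+1) (j - k)).
Local Notation ga k := (g (i - k) (j - k.+1)).

Lemma pt k : (g' (i - k.+1) (j - k.+1) + g (i - k.+1) (j - k.+1) =
  maxn (al k.+1) (ga k.+1) + minn (al k) (ga k))%N.
Proof.
case: (boolP (cond (i - k.+1) (j - k.+1))) => hc.
  have [d1 d2 d3 d4] := diag_bounds hc; rewrite g'_diag //.
  have E1 : (i - k.+1).-1 = i - k.+2 by lia.
  have E2 : (j - k.+1).-1 = j - k.+2 by lia.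
  have E3 : (i - k.+1).+1 = i - k by lia.
  have E4 : (j - k.+1).+1 = j - k by lia.
  move: d1 d2 d3 d4; rewrite E1 E2 E3 E4 => d1 d2 d3 d4.
  rewrite subnK //; lia.
have [hi hj] := Hij.
have [Z|Z] : (i - k.+1 = 0 \/ j - k.+1 = 0)%N by move: hc; lia.
  have Z2 : (i - k.+2 = 0)%N by lia.
  rewrite Z Z2 g'0l !g0l; lia.
have Z2 : (j - k.+2 = 0)%N by lia.
rewrite Z Z2 g'0r !g0r; lia.
Qed.

Lemma Asum : ((g' i j + \sum_(0 <= k < i) g' (i - k.+1) (j - k.+1))
   + \sum_(0 <= k < i) g (i - k.+1) (j - k.+1) =
   T i j + \sum_(0 <= k < i) al k + \sum_(0 <= k < i) ga k)%N.
Proof.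
rewrite g'_ij -addnA -big_split /=.
under eq_bigr do rewrite pt.
rewrite big_split /=.
have E : (\sum_(0 <= k < i.+1) maxn (al k) (ga k) =
   maxn (al 0) (ga 0) + \sum_(0 <= k < i) maxn (al k.+1) (ga k.+1))%N.
  by rewrite big_nat_recl.
have E2 : (\sum_(0 <= k < i.+1) maxn (al k) (ga k) =
   \sum_(0 <= k < i) maxn (al k) (ga k) + maxn (al i) (ga i))%N.
  by rewrite big_nat_recr.
rewrite subnn (_ : i - i.+1 = 0)%N ?g0l in E2; last by lia.
rewrite !subn1 !subn0 in E.
have H2 : (\sum_(0 <= k < i) maxn (al k) (ga k) + \sum_(0 <= k < i) minn (al k) (ga k)
   = \sum_(0 <= k < i) al k + \sum_(0 <= k < i) ga k)%N.
  by rewrite -!big_split; apply: eq_bigr => k _ /=; lia.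
move: E E2 H2 => /= E E2 H2; lia.
Qed.

Lemma DB : (\sum_(0 <= k < i) g (i - k.+1) (j - k.+1) = Dg g i.-1 j.-1)%N.
Proof.
rewrite (eq_bigr (fun k => g (i.-1 - k) (j.-1 - k))); last by move=> k _; congr getp; lia.
rewrite /Dg (@sum_widen (fun k => g (i.-1 - k) (j.-1 - k)) i.-1 i) //; first lia.
by move=> k hk; rewrite (_ : i.-1 - k = 0)%N ?g0l //; lia.
Qed.

Lemma DC1 : (\sum_(0 <= k < i) al k = Dg g i.-1 j)%N.
Proof.
rewrite (eq_bigr (fun k => g (i.-1 - k) (j - k))); last by move=> k _; congr getp; lia.
rewrite /Dg (@sum_widen (fun k => g (i.-1 - k) (j - k)) i.-1 i) //; first lia.
by move=> k hk; rewrite (_ : i.-1 - k = 0)%N ?g0l //; lia.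
Qed.

Lemma DC2 : (\sum_(0 <= k < i) ga k = Dg g i j.-1)%N.
Proof.
by rewrite /Dg; apply: eq_bigr => k _; congr getp; lia.
Qed.

Lemma DA : (g' i j + \sum_(0 <= k < i) g' (i - k.+1) (j - k.+1) = Dg g' i j)%N.
Proof.
rewrite /Dg -(@sum_widen (fun k => g' (i - k) (j - k)) i i.+1) //; last first.
  by move=> k hk; rewrite (_ : i - k = 0)%N ?g'0l //; lia.
by rewrite big_nat_recl // !subn0.
Qed.

Lemma DR a c : (a = 0 \/ c = 0 \/ ((a,c) \in p /\ (a.+1,c.+1) \notin p))%N ->
  Dg g a c = Rs T p a c.
Proof.
case=> [->|[->|[h1 h2]]]; last exact: HD.
- rewrite /Dg big_geq // /Rs big1_seq // => -[u v] /andP[_ hb] /=.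
  have [hu hv] := young_pos Hy hb.
  case: ifP => // ?; lia.
- rewrite /Dg big1 ?/Rs ?big1_seq //.
    move=> -[u v] /andP[_ hb] /=.
    have [hu hv] := young_pos Hy hb.
    case: ifP => // ?; lia.
  by move=> k _; rewrite sub0n g0r.
Qed.

Local Notation H := (\sum_(b <- p) (if in_hook b.1 b.2 (i,j) then T b.1 b.2 else 0))%N.

Lemma HR : (H + 2 * Rs T p i.-1 j.-1 = Rs T p i.-1 j + Rs T p i j.-1)%N.
Proof.
rewrite /Rs big_distrr -!big_split /=; apply: eq_big_seq => -[u v] hb /=.
have hne : ~~ ((u == i) && (v == j)).
  by apply/negP => /andP[/eqP E1 /eqP E2]; move: Hnin; rewrite -E1 -E2 hb.
have [hi hj] := Hij; rewrite /in_hook /=.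
do 4 (case: ifP => ?); lia.
Qed.

Lemma Rij : (Rs T p i j = H + Rs T p i.-1 j.-1)%N.
Proof.
rewrite /Rs -!big_split /=; apply: eq_big_seq => -[u v] hb /=.
have [hi hj] := Hij; rewrite /in_hook /=.
do 3 (case: ifP => ?); lia.
Qed.



Lemma cnt b : b \in p' ->
  (\sum_(0 <= k < i) ((b == (i - k.+1, j - k.+1)) : nat))%N = cond b.1 b.2.
Proof.
case: b => u v hb /=; have [hu hv] := young_pos Hy' hb.
rewrite sum_bool; case: (boolP (cond u v)) => hc.
  rewrite (@eq_in_count _ _ (pred1 (i - u.+1))); last first.
    by move=> k _ /=; rewrite xpair_eqE; lia.
  rewrite count_uniq_mem ?iota_uniq // mem_index_iota.
  by rewrite (_ : (0 <= i - u.+1 < i)%N = true) //; lia.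
rewrite (@eq_in_count _ _ pred0) ?count_pred0 // => k _ /=.
rewrite xpair_eqE; lia.
Qed.

Lemma xc_eq u v : cond u v -> xc x (u,v) = xc x (i,j).
Proof. by move=> hc; rewrite /xc /=; congr x; lia. Qed.

Lemma hB : Dg g i.-1 j.-1 = Rs T p i.-1 j.-1.
Proof.
have [hi hj] := Hij.
apply: DR; have [h1|h1] := leqP i 1; first by left; lia.
have [h2|h2] := leqP j 1; first by right; left; lia.
right; right; split; first by apply: rect; lia.
by rewrite !prednK.
Qed.

Lemma hC1 : Dg g i.-1 j = Rs T p i.-1 j.
Proof.
have [hi hj] := Hij.
apply: DR; have [h1|h1] := leqP i 1; first by left; lia.
right; right; split; first exact: up_in.
by rewrite prednK //; apply/negP => h; apply: (outside h); lia.
Qed.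

Lemma hC2 : Dg g i j.-1 = Rs T p i j.-1.
Proof.
have [hi hj] := Hij.
apply: DR; have [h1|h1] := leqP j 1; first by right; left; lia.
right; right; split; first exact: left_in.
by rewrite prednK //; apply/negP => h; apply: (outside h); lia.
Qed.

Lemma HA : (g' i j + \sum_(0 <= k < i) g' (i - k.+1) (j - k.+1) =
  T i j + H + \sum_(0 <= k < i) g (i - k.+1) (j - k.+1))%N.
Proof.
have := Asum; have := HR; rewrite DB DC1 DC2 hB hC1 hC2; lia.
Qed.

Lemma HD' a c : (a,c) \in p' -> (a.+1,c.+1) \notin p' -> Dg g' a c = Rs T p' a c.
Proof.
move=> ha hn; have [hi hj] := Hij.
have RsE : forall a c, Rs T p' a c =
    (Rs T p a c + (if (i <= a) && (j <= c) then T i j else 0))%N.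
  by move=> *; rewrite /Rs big_rcons.
move: ha; rewrite mem_p' => /orP[/andP[/eqP Ea /eqP Ec]|ha].
  subst a c; rewrite RsE !leqnn /= -DA.
  have := HA; have := Rij; have := DB; rewrite hB; lia.
rewrite RsE.
have -> : ((i <= a) && (j <= c)) = false.
  by apply/negP => /andP[h1 h2]; exact: outside ha h1 h2.
have hn' : (a.+1, c.+1) \notin p by apply: contra hn; rewrite mem_p' => ->; rewrite orbT.
rewrite addn0 -HD //.
rewrite /Dg; apply: eq_big_nat => k /andP[_ hk].
have [hu hv] := young_pos Hy ha.
apply: g'_other.
  by apply/negP => /andP[/eqP E1 /eqP E2]; apply: (outside ha); lia.
apply/negP => hc.
have [E|[E|E]] : ((a.+1 = i) /\ (c.+1 = j)) \/ ((a.+1 < i) /\ (c.+1 < j))%N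
    \/ ((i <= a) /\ (j <= c))%N by move: hc; lia.
- by move: hn; case: E => -> ->; rewrite mem_p' !eqxx.
- by move: hn'; rewrite rect //; lia.
- by case: E; exact: outside ha.
Qed.

Lemma RHSstep : RHSs x T p' = (RHSs x T p + xc x (i,j) *+ (T i j + H)%N)%R.
Proof.
rewrite /RHSs big_rcons /=.
have hk_ij : hk x p' (i,j) = xc x (i,j).
  rewrite /hk big_rcons /= /in_hook /= !eqxx !leqnn /= big1_seq ?add0r //.
  move=> -[u v] /andP[hh hb] /=; exfalso.
  move: hh; rewrite /in_hook /= => /orP[/andP[/eqP E1 h]|/andP[/eqP E1 h]];
    apply: (outside hb); lia.
rewrite hk_ij.
rewrite (eq_bigr (fun b => hk x p b *+ T b.1 b.2 +
   (if in_hook b.1 b.2 (i,j) then xc x (i,j) *+ T b.1 b.2 else 0))%R); last first.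
  by move=> b _; rewrite /hk big_rcons /= mulrnDl; case: ifP => _; rewrite ?mul0rn.
rewrite big_split /= -addrA; congr (_ + _)%R.
rewrite mulrnDr addrC; congr (_ + _)%R.
rewrite -sumrMnr; apply: eq_bigr => b _; case: ifP => _; by rewrite ?mulr0n.
Qed.

Lemma WLstep : WL x p' f' = (WL x p f + xc x (i,j) *+ (T i j + H)%N)%R.
Proof.
have E1 : WL x p' f' = (\sum_(b <- p') xc x b *+ g' b.1 b.2)%R.
  by rewrite /WL; apply: eq_big_seq => -[u v] hb /=; rewrite getp_in.
have Pw : forall b, b \in p' -> (g' b.1 b.2 + cond b.1 b.2 * g b.1 b.2 =
    (b != (i,j)) * g b.1 b.2 + ((b == (i,j)) * g' b.1 b.2 + cond b.1 b.2 * g' b.1 b.2))%N.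
  move=> [u v] hb /=; rewrite xpair_eqE.
  case: (boolP ((u == i) && (v == j))) => hij /=.
    have hc : ~~ cond u v by move: hij => /andP[/eqP -> _]; rewrite ltnn !andbF.
    rewrite (negbTE hc) /=; lia.
  case: (boolP (cond u v)) => hc /=; first lia.
  rewrite g'_other //; lia.
have K : ((\sum_(b <- p') xc x b *+ g' b.1 b.2) +
          (\sum_(b <- p') xc x b *+ (cond b.1 b.2 * g b.1 b.2)%N) =
    (\sum_(b <- p') xc x b *+ ((b != (i,j)) * g b.1 b.2)%N) +
    ((\sum_(b <- p') xc x b *+ ((b == (i,j)) * g' b.1 b.2)%N) +
     (\sum_(b <- p') xc x b *+ (cond b.1 b.2 * g' b.1 b.2)%N)))%R.
  by rewrite -!big_split /=; apply: eq_big_seq => b hb; rewrite -!mulrnDr Pw.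
have Up' : uniq p' by rewrite rcons_uniq Hnin Hu.
have T1 : forall h : nat -> nat -> nat, (forall a c, h a c != 0%N -> (a,c) \in p') ->
   (\sum_(b <- p') xc x b *+ (cond b.1 b.2 * h b.1 b.2)%N =
    xc x (i,j) *+ (\sum_(0 <= k < i) h (i - k.+1) (j - k.+1))%N)%R.
  move=> h Hh.
  rewrite (eq_bigr (fun b => (xc x (i,j) *+ (cond b.1 b.2 * h b.1 b.2)%N)%R)); last first.
    move=> [u v] _ /=; case: (boolP (cond u v)) => hc; first by rewrite (xc_eq hc).
    by rewrite mul0n !mulr0n.
  rewrite sumrMnr (@reindex _ h (fun b => cond b.1 b.2) (fun k => (i - k.+1, j - k.+1)) i) //.
    exact: cnt.
  by move=> k /Hh.
have Hg : forall a c, g a c != 0%N -> (a,c) \in p'.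
  by move=> a c; rewrite /getp; case: ifP => // h _; rewrite mem_p' h orbT.
have Hg' : forall a c, g' a c != 0%N -> (a,c) \in p'.
  by move=> a c; rewrite /getp; case: ifP.
rewrite (T1 _ Hg) (T1 _ Hg') in K.
have T3 : (\sum_(b <- p') xc x b *+ ((b != (i,j)) * g b.1 b.2)%N)%R = WL x p f.
  rewrite big_rcons /= eqxx mul0n mulr0n addr0; apply: eq_big_seq => -[u v] hb /=.
  have -> : ((u, v) != (i, j)) by apply/negP => /eqP E; move: Hnin; rewrite -E hb.
  by rewrite mul1n getp_in.
have T4 : (\sum_(b <- p') xc x b *+ ((b == (i,j)) * g' b.1 b.2)%N)%R = (xc x (i,j) *+ g' i j)%R.
  rewrite big_rcons /= eqxx mul1n big1_seq ?add0r // => -[u v] /andP[_ hb] /=.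
  have -> : ((u, v) == (i, j)) = false by apply/negP => /eqP E; move: Hnin; rewrite -E hb.
  by rewrite mul0n mulr0n.
rewrite T3 T4 in K.
rewrite E1; apply: (@addIr _ (xc x (i,j) *+ (\sum_(0 <= k < i) g (i - k.+1) (j - k.+1))%N)%R).
by rewrite K -!mulrnDr -addrA -mulrnDr HA.
Qed.



Lemma step_inv : WL x p f = RHSs x T p -> Inv x T p' f'.
Proof.
move=> HW; split.
- exact: rpp'.
- exact: HD'.
- by rewrite WLstep RHSstep HW.
Qed.

End Step.

Lemma step_inv' (R : zmodType) (x : int -> R) T p f i j : uniq p -> young_seq p ->
  (i,j) \notin p -> young_seq (rcons p (i,j)) -> Inv x T p f ->
  Inv x T (rcons p (i,j)) (toggle_step p f (i,j) (T i j)).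
Proof. by move=> U Y N Y' [h1 h2 h3]; apply: step_inv. Qed.

Lemma main_rec (R : zmodType) (x : int -> R) T s : forall p f,
  uniq (p ++ s) -> (forall n, young_seq (take n (p ++ s))) -> Inv x T p f ->
  WL x (p ++ s) (toggle_rec p f s T) = RHSs x T (p ++ s).
Proof.
elim: s => [|[i j] s IH] p f U Y I /=.
  by rewrite cats0; case: I.
have Yp : young_seq p by have := Y (size p); rewrite take_size_cat.
have Yp' : young_seq (rcons p (i,j)).
  by have := Y (size p).+1; rewrite -cat_rcons take_size_cat // size_rcons.
have := U; rewrite -cat_rcons cat_uniq rcons_uniq => /and3P[/andP[Nin Up] _ _].
apply: IH.
- by rewrite ?cat_rcons.
- by move=> n; rewrite ?cat_rcons.
- exact: step_inv'.
Qed.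

Unset Implicit Arguments.
Local Open Scope ring_scope.

Theorem proposition3p3 (R : zmodType) (x : int -> R) (la : seq nat)
  (T : nat -> nat -> nat) (s : seq (nat * nat)) :
  is_partition la -> building_seq la s ->
  weight x la (toggle s T) = \sum_(b <- boxes la) hooklen x la b.1 b.2 *+ T b.1 b.2.
Proof.
move=> _ [U [Hp Y]].
have I0 : Inv x T [::] (fun _ _ => 0%N).
  by split => //; rewrite /WL /RHSs !big_nil.
have M := @main_rec R x T s [::] _ U Y I0.
have Hh : forall b, hooklen x la b.1 b.2 = hk x s b.
  by move=> b; rewrite /hooklen /hk (perm_big _ Hp).
rewrite (eq_bigr (fun b => hk x s b *+ T b.1 b.2)); last by move=> b _; rewrite Hh.
rewrite /weight -!(perm_big _ Hp).
exact: M.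
Qed.
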